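(* In $\mathsf{HSLat}$, every sub-Heyting semilattice $X$ of a Heyting semilattice $A$ has a centraliser, namely $Z_A(X)=\{a\in A\mid (x\Rightarrow a)=a\text{ and }(a\Rightarrow x)=x\text{ for all }x\in X\}$; hence $\mathsf{HSLat}$ is algebraically cartesian closed. Moreover, if $X$ is a normal subobject of $A$, then $Z_A(X)$ is a normal subobject of $A$.
   Context: A Heyting semilattice is a meet-semilattice with top $1$ and an operation $\Rightarrow$ with $x\wedge y\le z$ iff $x\le y\Rightarrow z$; morphisms preserve $1,\wedge,\Rightarrow$. Subobjects $X,Y\le A$ Huq-commute if there is a morphism $\varphi\colon X\times Y\to A$ with $\varphi(x,1)=x$, $\varphi(1,y)=y$. The centraliser $Z_A(X)$ is the largest subobject of $A$ Huq-commuting with $X$. Normal subobjects of $A$ are kernels, which in $\mathsf{HSLat}$ are exactly the filters (non-empty, $\wedge$-closed, up-closed subsets). A semi-abelian category is algebraically cartesian closed iff centralisers of all subobjects exist. *)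

(* Defs.v *)
Record HSLat := {
  hs_carrier :> Type;
  hs_top : hs_carrier;
  hs_meet : hs_carrier -> hs_carrier -> hs_carrier;
  hs_imp : hs_carrier -> hs_carrier -> hs_carrier;
  hs_meetA : forall x y z, hs_meet x (hs_meet y z) = hs_meet (hs_meet x y) z;
  hs_meetC : forall x y, hs_meet x y = hs_meet y x;
  hs_meetxx : forall x, hs_meet x x = x;
  hs_meet1 : forall x, hs_meet x hs_top = x;
  (* x /\ y <= z  iff  x <= (y => z), with a <= b :<-> a /\ b = a *)
  hs_residuation : forall x y z,
      hs_meet (hs_meet x y) z = hs_meet x y <-> hs_meet x (hs_imp y z) = x
}.

Arguments hs_top {h}.
Arguments hs_meet {h}.
Arguments hs_imp {h}.

Definition hs_le {A : HSLat} (a b : A) : Prop := hs_meet a b = a.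

Definition is_subobject {A : HSLat} (X : A -> Prop) : Prop :=
  X hs_top /\
  (forall x y, X x -> X y -> X (hs_meet x y)) /\
  (forall x y, X x -> X y -> X (hs_imp x y)).

(* Huq-commutation: a morphism phi : X x Y -> A of Heyting semilattices
   (operations on X x Y componentwise; phi given as a function on A x A
   whose values outside X x Y are irrelevant) with phi(x,1)=x, phi(1,y)=y. *)
Definition huq_commute {A : HSLat} (X Y : A -> Prop) : Prop :=
  exists phi : A -> A -> A,
    phi hs_top hs_top = hs_top /\
    (forall x1 x2 y1 y2, X x1 -> X x2 -> Y y1 -> Y y2 ->
        phi (hs_meet x1 x2) (hs_meet y1 y2) = hs_meet (phi x1 y1) (phi x2 y2)) /\
    (forall x1 x2 y1 y2, X x1 -> X x2 -> Y y1 -> Y y2 ->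
        phi (hs_imp x1 x2) (hs_imp y1 y2) = hs_imp (phi x1 y1) (phi x2 y2)) /\
    (forall x, X x -> phi x hs_top = x) /\
    (forall y, Y y -> phi hs_top y = y).

Definition centraliser_set {A : HSLat} (X : A -> Prop) : A -> Prop :=
  fun a => forall x, X x -> hs_imp x a = a /\ hs_imp a x = x.

Definition is_centraliser {A : HSLat} (X Z : A -> Prop) : Prop :=
  is_subobject Z /\ huq_commute X Z /\
  (forall Y, is_subobject Y -> huq_commute X Y -> forall a, Y a -> Z a).

(* normal subobjects = filters *)
Definition is_filter {A : HSLat} (F : A -> Prop) : Prop :=
  (exists a, F a) /\
  (forall x y, F x -> F y -> F (hs_meet x y)) /\
  (forall x y, F x -> hs_le x y -> F y).

(* Main.v *)
Require Import Defs.
From Stdlib Require Import Setoid.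

Section Basics.
Variable A : HSLat.
Local Notation "a <= b" := (@hs_le A a b).
Local Notation "a ∧ b" := (@hs_meet A a b) (at level 40, left associativity).
Local Notation "a ⇒ b" := (@hs_imp A a b) (at level 45, right associativity).
Local Notation "1" := (@hs_top A).

Lemma le_refl (a : A) : a <= a.
Proof. apply hs_meetxx. Qed.
Lemma le_antisym (a b : A) : a <= b -> b <= a -> a = b.
Proof. unfold hs_le; intros H1 H2. transitivity (hs_meet a b). symmetry; exact H1. rewrite hs_meetC; exact H2. Qed.
Lemma le_trans (a b c : A) : a <= b -> b <= c -> a <= c.
Proof. unfold hs_le; intros H1 H2. rewrite <- H1, <- hs_meetA, H2. reflexivity. Qed.
Lemma meet_lb1 (a b : A) : a ∧ b <= a.
Proof. unfold hs_le. rewrite (hs_meetC _ a b), <- hs_meetA, hs_meetxx. reflexivity. Qed.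
Lemma meet_lb2 (a b : A) : a ∧ b <= b.
Proof. unfold hs_le. rewrite <- hs_meetA, hs_meetxx. reflexivity. Qed.
Lemma meet_glb (a b c : A) : c <= a -> c <= b -> c <= a ∧ b.
Proof. unfold hs_le; intros H1 H2. rewrite hs_meetA, H1, H2. reflexivity. Qed.
Lemma le_top (a : A) : a <= 1.
Proof. apply hs_meet1. Qed.
Lemma resid (c x y : A) : c ∧ x <= y <-> c <= x ⇒ y.
Proof. apply hs_residuation. Qed.
Lemma le_ext (a b : A) : (forall c, c <= a <-> c <= b) -> a = b.
Proof. intro H. apply le_antisym; apply H; apply le_refl. Qed.
Lemma meet_mono (a b c : A) : a <= b -> c ∧ a <= c ∧ b.
Proof. intro H. apply meet_glb. apply meet_lb1. eapply le_trans. apply meet_lb2. exact H. Qed.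
Lemma top_eq (a : A) : 1 <= a -> a = 1.
Proof. intro H. apply le_antisym. apply le_top. exact H. Qed.
Lemma imp_ge (x y : A) : y <= x ⇒ y.
Proof. apply resid. apply meet_lb1. Qed.
Lemma imp_of_le (x y : A) : x <= y -> x ⇒ y = 1.
Proof. intro H. apply top_eq, resid. eapply le_trans. apply meet_lb2. exact H. Qed.
Lemma imp_top (x : A) : x ⇒ 1 = 1.
Proof. apply imp_of_le, le_top. Qed.
Lemma top_imp (x : A) : 1 ⇒ x = x.
Proof. apply le_ext; intro c. rewrite <- resid. unfold hs_le. rewrite hs_meet1. tauto. Qed.
Lemma imp_meet_r (x y z : A) : x ⇒ (y ∧ z) = (x ⇒ y) ∧ (x ⇒ z).
Proof.
  apply le_ext; intro c. rewrite <- resid. split; intro H.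
  - apply meet_glb; apply resid; eapply le_trans; [exact H| apply meet_lb1 | exact H | apply meet_lb2].
  - apply meet_glb; apply resid; eapply le_trans; [exact H| apply meet_lb1 | exact H | apply meet_lb2].
Qed.
Lemma imp_meet_l (x y z : A) : (x ∧ y) ⇒ z = x ⇒ (y ⇒ z).
Proof.
  apply le_ext; intro c. rewrite <- !resid. rewrite hs_meetA. tauto.
Qed.
Lemma imp_swap (a x b : A) : a ⇒ (x ⇒ b) = x ⇒ (a ⇒ b).
Proof. rewrite <- !imp_meet_l, hs_meetC. reflexivity. Qed.
Lemma imp_anti (a b x : A) : a <= b -> b ⇒ x <= a ⇒ x.
Proof. intro H. apply resid. eapply le_trans. apply meet_mono, H. apply resid, le_refl. Qed.
Lemma mp (x y : A) : x ∧ (x ⇒ y) <= y.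
Proof. rewrite hs_meetC. apply resid, le_refl. Qed.
End Basics.

Theorem mainTheorem18 (A : HSLat) (X : A -> Prop) :
  is_subobject X ->
  is_centraliser X (centraliser_set X) /\
  (is_filter X -> is_filter (centraliser_set X)).
Proof.
  intros [X1 [Xm Xi]].
  assert (Z1 : centraliser_set X hs_top).
  { intros x _. split. apply imp_top. apply top_imp. }
  assert (Zm : forall a b, centraliser_set X a -> centraliser_set X b ->
                 centraliser_set X (hs_meet a b)).
  { intros a b Ha Hb x Hx. destruct (Ha x Hx) as [Ha1 Ha2]; destruct (Hb x Hx) as [Hb1 Hb2].
    split. rewrite imp_meet_r, Ha1, Hb1; reflexivity.
    rewrite imp_meet_l, Hb2, Ha2; reflexivity. }
  assert (Zi : forall a b, centraliser_set X a -> centraliser_set X b ->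
                 centraliser_set X (hs_imp a b)).
  { intros a b Ha Hb x Hx. destruct (Ha x Hx) as [Ha1 Ha2]; destruct (Hb x Hx) as [Hb1 Hb2].
    split. rewrite imp_swap, Hb1; reflexivity.
    apply le_antisym; [| apply imp_ge].
    rewrite <- Hb2 at 2. apply resid. eapply le_trans.
    apply meet_mono, imp_ge. rewrite hs_meetC. apply mp. }
  split.
  - split; [split; [exact Z1| split; [exact Zm| exact Zi]] | split].
    + exists (fun x a => hs_meet x a). repeat split.
      * apply hs_meetxx.
      * intros. rewrite !hs_meetA. f_equal. rewrite <- !hs_meetA. f_equal. apply hs_meetC.
      * intros x1 x2 a1 a2 Hx1 Hx2 Ha1 Ha2.
        rewrite imp_meet_r, !imp_meet_l.
        rewrite (proj1 (Zi a1 a2 Ha1 Ha2 x1 Hx1)).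
        idtac.
        rewrite imp_swap, (proj2 (Ha1 _ (Xi x1 x2 Hx1 Hx2))); reflexivity.
      * intros. apply hs_meet1.
      * intros. rewrite hs_meetC. apply hs_meet1.
    + intros Y [Y1 _] [phi [_ [_ [Pi [Px Py]]]]] a Ya x Hx. split.
      * pose proof (Pi x hs_top hs_top a Hx X1 Y1 Ya) as E.
        rewrite imp_top, top_imp, Px, Py in E by assumption. congruence.
      * pose proof (Pi hs_top x a hs_top X1 Hx Ya Y1) as E.
        rewrite imp_top, top_imp, Px, Py in E by assumption. congruence.
  - intros [_ [_ Fup]]. split; [exists hs_top; exact Z1| split; [exact Zm|]].
    intros a b Ha Hab x Hx. split.
    + set (x' := hs_imp (hs_imp x b) b).
      assert (Hx' : X x').
      { apply (Fup x). exact Hx. apply resid. apply mp. }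
      destruct (Ha x' Hx') as [_ Ha2].
      assert (E : x' = hs_top).
      { rewrite <- Ha2. apply imp_of_le. eapply le_trans. exact Hab. apply imp_ge. }
      apply le_antisym; [| apply imp_ge].
      assert (T : hs_le hs_top x') by (rewrite E; apply le_refl).
      apply (proj2 (resid _ _ _ _)) in T. rewrite hs_meetC, hs_meet1 in T. exact T.
    + destruct (Ha x Hx) as [_ Ha2]. apply le_antisym; [| apply imp_ge].
      rewrite <- Ha2 at 2. apply imp_anti. exact Hab.
Qed.
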